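(* Let $H=\sum_{i=1}^Nc_iP_i$ be a Pauli Hamiltonian, $|\psi\rangle$ a state, $\mathcal{R}=(G^{[1]},\dots,G^{[m]})$ a repacked grouping (of some grouping of $H$), and $\mathcal{R}'=(G'^{[1]},\dots,G'^{[m]})$ a refinement of $\mathcal{R}$ such that for some $1\le\ell\le m$: $G'^{[j]}=G^{[j]}$ for all $j\ne\ell$, and $G'^{[\ell]}\setminus G^{[\ell]}=\{P_s\}$ for some $P_s\in\mathrm{supp}(H)$. Fix positive integer shot counts $M_1,\dots,M_m$ used for both $\mathcal{R}$ and $\mathcal{R}'$. Define, for $t,t'\in\{1,\dots,N\}$, $\alpha_t=\sum_{j\in\Gamma_{\mathcal{R}}(t)}M_j$ and $\alpha_{t,t'}=\sum_{j\in\Gamma_{\mathcal{R}}(t)\cap\Gamma_{\mathcal{R}}(t')}M_j$, and $\mathcal{Q}_\ell=\{i:P_i\in G^{[\ell]}\}$, $\mathcal{Q}_\ell^\complement=\{1,\dots,N\}\setminus\mathcal{Q}_\ell$. Then, for the shot-weighted averaging estimators, $\mathrm{Var}(\overline{E}_{\mathcal{R}'})\le\mathrm{Var}(\overline{E}_{\mathcal{R}})$ if and only if $$\tfrac12c_s^2\sigma^2_{P_s}\ \ge\ \sum_{i\in\mathcal{Q}_\ell}c_ic_s\sigma_{P_iP_s}\frac{\alpha_s-\alpha_{i,s}}{\alpha_i}\ -\sum_{i\in\mathcal{Q}_\ell^\complement,\,i\ne s}c_ic_s\sigma_{P_iP_s}\frac{\alpha_{i,s}}{\alpha_i},$$ and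 $\mathrm{Var}(\overline{E}_{\mathcal{R}'})<\mathrm{Var}(\overline{E}_{\mathcal{R}})$ if and only if this inequality is strict.
   Context: A Pauli Hamiltonian is $H=\sum_{i=1}^Nc_iP_i$ with real nonzero $c_i$ and distinct $n$-qubit Pauli strings; $\mathrm{supp}(H)=\{P_1,\dots,P_N\}$. $\sigma_P^2=1-\langle P\rangle^2$, and for commuting $P,Q$, $\sigma_{PQ}=\langle PQ\rangle-\langle P\rangle\langle Q\rangle$ (terms with $\alpha_{i,s}=0$, possibly involving non-commuting pairs, are taken to be $0$). A repacked grouping is a list of $m$ sets of mutually commuting operators of $\mathrm{supp}(H)$ covering $\mathrm{supp}(H)$, possibly overlapping, each containing the corresponding group of an underlying disjoint grouping; $(G'^{[j]})$ is a refinement of $(G^{[j]})$ if $G^{[j]}\subseteq G'^{[j]}$ for all $j$ (and it is again such a list). $\Gamma_{\mathcal{S}}(i)=\{j:P_i\in\text{group }j\text{ of }\mathcal{S}\}$. Measurement model: group $j$ is measured in $M_j$ independent shots with simultaneous $\pm1$ outcomes of all its operators; different groups are independent. The shot-weighted estimator is $\overline{E}_{\mathcal{S}}=\sum_ic_i\sum_{j\in\Gamma_{\mathcal{S}}(i)}\frac{M_j}{\sum_{k\in\Gamma_{\mathcal{S}}(i)}M_k}\overline{\langle P_i\rangle}_{(j)}$, whose variance is $\sum_i\frac{c_i^2\sigma_{P_i}^2}{\sum_{j\in\Gamma_{\mathcal{S}}(i)}M_j}+2\sum_{i<k}\frac{c_ic_k\sigma_{P_iP_k}\sum_{j\in\Gamma_{\mathcal{S}}(i)\cap\Gamma_{\mathcal{S}}(k)}M_j}{(\sum_{j\in\Gamma_{\mathcal{S}}(i)}M_j)(\sum_{j\in\Gamma_{\mathcal{S}}(k)}M_j)}$.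 *)

(* Defs.v *)
From HB Require Import structures.
From mathcomp Require Import all_boot all_order all_algebra.
From mathcomp Require Import complex.
Set Implicit Arguments. Unset Strict Implicit. Unset Printing Implicit Defensive.
Import Order.TTheory GRing.Theory Num.Theory.
Local Open Scope ring_scope.

(** Computational basis of n qubits. *)
Definition basis (n : nat) := {ffun 'I_n -> bool}.

(** An n-qubit Pauli string: each letter in 'I_4 with 0 = I, 1 = X, 2 = Y, 3 = Z. *)
Definition pstring (n : nat) := {ffun 'I_n -> 'I_4}.

Section Pauli.
Variable R : rcfType.
Local Notation C := R[i].

(** Entry (row b1, column b2) of the single-qubit Pauli matrix with letter a,
    basis order |0> = false, |1> = true. *)
Definition pentry (a : 'I_4) (b1 b2 : bool) : C :=
  match val a with
  | 0 => if b1 == b2 then 1 else 0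
  | 1 => if b1 == b2 then 0 else 1
  | 2 => if b1 == b2 then 0 else (if b1 then 'i%C else - 'i%C)
  | _ => if b1 == b2 then (if b1 then -1 else 1) else 0
  end.

(** Operators on (C^2)^{\otimes n}, as kernels (row, column) -> entry. *)
Definition op (n : nat) := basis n -> basis n -> C.

Definition pmat (n : nat) (P : pstring n) : op n :=
  fun x y => \prod_(k < n) pentry (P k) (x k) (y k).

Definition opmul (n : nat) (A B : op n) : op n :=
  fun x y => \sum_(z : basis n) A x z * B z y.

Definition pcommute (n : nat) (P Q : pstring n) : Prop :=
  forall x y, opmul (pmat P) (pmat Q) x y = opmul (pmat Q) (pmat P) x y.

Definition is_state (n : nat) (psi : basis n -> C) : Prop :=
  \sum_(x : basis n) (complex.Re (psi x) ^+ 2 + complex.Im (psi x) ^+ 2) = 1.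

(** Expectation value <psi|A|psi> (real part; real for Hermitian A). *)
Definition expv (n : nat) (psi : basis n -> C) (A : op n) : R :=
  @complex.Re R (\sum_(x : basis n) \sum_(y : basis n) (conjc (psi x)) * A x y * psi y).

Definition sigma2 (n : nat) (psi : basis n -> C) (P : pstring n) : R :=
  1 - expv psi (pmat P) ^+ 2.

Definition sigma (n : nat) (psi : basis n -> C) (P Q : pstring n) : R :=
  expv psi (opmul (pmat P) (pmat Q)) - expv psi (pmat P) * expv psi (pmat Q).

End Pauli.

(** * Groupings (groups are sets of term indices i, standing for P_i) *)

Definition commuting_set (R : rcfType) (n N : nat) (P : 'I_N -> pstring n)
    (A : {set 'I_N}) : Prop :=
  forall i k, i \in A -> k \in A -> pcommute R (P i) (P k).

Definition is_grouping (R : rcfType) (n N m : nat) (P : 'I_N -> pstring n)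
    (D : 'I_m -> {set 'I_N}) : Prop :=
  [/\ forall j, D j != set0,
      forall j j', j != j' -> [disjoint D j & D j'],
      forall i, exists j, i \in D j
    & forall j, commuting_set R P (D j)].

Definition is_repacked (R : rcfType) (n N m : nat) (P : 'I_N -> pstring n)
    (G : 'I_m -> {set 'I_N}) : Prop :=
  exists D : 'I_m -> {set 'I_N},
    [/\ is_grouping R P D,
        forall j, D j \subset G j
      & forall j, commuting_set R P (G j)].

Definition refines (N m : nat) (G G' : 'I_m -> {set 'I_N}) : Prop :=
  forall j, G j \subset G' j.

Definition Gam (N m : nat) (G : 'I_m -> {set 'I_N}) (i : 'I_N) : {set 'I_m} :=
  [set j | i \in G j].

Section Var.
Variable R : rcfType.

Definition alpha (N m : nat) (G : 'I_m -> {set 'I_N}) (M : 'I_m -> nat)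
    (t : 'I_N) : R :=
  \sum_(j in Gam G t) (M j)%:R.

Definition alpha2 (N m : nat) (G : 'I_m -> {set 'I_N}) (M : 'I_m -> nat)
    (t t' : 'I_N) : R :=
  \sum_(j in Gam G t :&: Gam G t') (M j)%:R.

(** Variance of the shot-weighted estimator, as given in the paper.
    (Covariance terms are multiplied by alpha_{i,k}, so they vanish whenever
    alpha_{i,k} = 0, in particular for non-commuting pairs.) *)
Definition Var_est (n N m : nat) (c : 'I_N -> R) (P : 'I_N -> pstring n)
    (psi : basis n -> R[i]) (G : 'I_m -> {set 'I_N}) (M : 'I_m -> nat) : R :=
  \sum_(i < N) c i ^+ 2 * sigma2 psi (P i) / alpha G M i
  + 2 * \sum_(i < N) \sum_(k < N | (i < k)%N)
          c i * c k * sigma psi (P i) (P k) * alpha2 G M i k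
          / (alpha G M i * alpha G M k).

End Var.

(* Main.v *)
Require Import Defs.
From HB Require Import structures.
From mathcomp Require Import all_boot all_order all_algebra.
From mathcomp Require Import complex.
From mathcomp Require Import ring lra.
Set Implicit Arguments. Unset Strict Implicit. Unset Printing Implicit Defensive.
Import Order.TTheory GRing.Theory Num.Theory.
Local Open Scope ring_scope.

Lemma sigma_sym (R : rcfType) n (psi : basis n -> R[i]) (P Q : pstring n) :
  pcommute R P Q -> sigma psi P Q = sigma psi Q P.
Proof.
move=> H; rewrite /sigma; congr (_ - _); last exact: mulrC.
rewrite /expv; congr (complex.Re _); apply: eq_bigr => x _; apply: eq_bigr => y _.
by rewrite H.
Qed.

Lemma pair_sum (R : rcfType) N (s : 'I_N) (f : 'I_N -> 'I_N -> R) :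
  (forall i k, i != s -> k != s -> f i k = 0) -> (forall i, f i s = f s i) ->
  \sum_(i < N) \sum_(k < N | (i < k)%N) f i k = \sum_(i < N | i != s) f i s.
Proof.
move=> H0 Hs.
rewrite (bigD1 s) //=.
have E : forall i, i != s -> \sum_(k < N | (i < k)%N) f i k = if (i < s)%N then f i s else 0.
  move=> i iNs; case: ltnP => h.
    rewrite (bigD1 s) //= big1 ?addr0 // => k /andP[_ ks]; exact: H0.
  apply: big1 => k ik; apply: H0 => //; apply/eqP => ks; move: ik; rewrite ks.
  by rewrite ltnNge h.
rewrite (eq_bigr _ E) -big_mkcondr /=.
rewrite [RHS](bigID (fun i : 'I_N => (i < s)%N)) /= addrC; congr (_ + _).
  apply: eq_big => [k|k _]; last by rewrite Hs.
  case: (ltngtP k s) => h; rewrite ?andbT ?andbF //=.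
  - by rewrite -(inj_eq val_inj) /= neq_ltn h orbT.
  - by rewrite -(inj_eq val_inj) /= h eqxx.
Qed.

Definition Tm (R : rcfType) n N m (c : 'I_N -> R) (P : 'I_N -> pstring n)
  (psi : basis n -> R[i]) (M : 'I_m -> nat) (H : 'I_m -> {set 'I_N}) (i k : 'I_N) : R :=
  c i * c k * sigma psi (P i) (P k) * alpha2 R H M i k / (alpha R H M i * alpha R H M k).

Lemma Var_estE (R : rcfType) n N m (c : 'I_N -> R) (P : 'I_N -> pstring n)
  (psi : basis n -> R[i]) (H : 'I_m -> {set 'I_N}) (M : 'I_m -> nat) :
  Var_est c P psi H M = \sum_(i < N) c i ^+ 2 * sigma2 psi (P i) / alpha R H M i
    + 2 * \sum_(i < N) \sum_(k < N | (i < k)%N) Tm c P psi M H i k.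
Proof. by []. Qed.

Lemma alpha2C (R : rcfType) N m (H : 'I_m -> {set 'I_N}) (M : 'I_m -> nat) i k :
  alpha2 R H M i k = alpha2 R H M k i.
Proof. by rewrite /alpha2 setIC. Qed.

Lemma Tm_sym (R : rcfType) n N m (c : 'I_N -> R) (P : 'I_N -> pstring n)
  (psi : basis n -> R[i]) (M : 'I_m -> nat) (H : 'I_m -> {set 'I_N}) :
  (forall j, commuting_set R P (H j)) ->
  forall i k, Tm c P psi M H i k = Tm c P psi M H k i.
Proof.
move=> Hc i k; rewrite /Tm alpha2C.
case: (set_0Vmem (Gam H k :&: Gam H i)) => [e|[j]].
  by rewrite /alpha2 e big_set0 !mulr0 !mul0r.
rewrite !inE => /andP[kj ij].
rewrite (sigma_sym _ (Hc j i k ij kj)) [alpha R H M i * _]mulrC; ring.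
Qed.

Lemma alpha_gt0 (R : rcfType) n N m (P : 'I_N -> pstring n) (H : 'I_m -> {set 'I_N})
  (M : 'I_m -> nat) : is_repacked R P H -> (forall j, (0 < M j)%N) ->
  forall t, 0 < alpha R H M t.
Proof.
move=> [D [[_ _ cov _] sub _]] hM t.
have [j tj] := cov t.
have jG : j \in Gam H t by rewrite inE (subsetP (sub j)).
rewrite /alpha (bigD1 j) //=.
have h1 : 0 < (M j)%:R :> R by rewrite ltr0n.
have h2 : 0 <= \sum_(i in Gam H t | i != j) (M i)%:R :> R by apply: sumr_ge0.
lra.
Qed.

Unset Implicit Arguments. Set Strict Implicit.
Theorem lemma4 (R : rcfType) (n N m : nat)
    (c : 'I_N -> R) (P : 'I_N -> pstring n) (psi : basis n -> R[i])
    (G G' : 'I_m -> {set 'I_N}) (M : 'I_m -> nat) (l : 'I_m) (s : 'I_N) :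
  (forall i, c i != 0) ->
  injective P ->
  is_state psi ->
  is_repacked R P G ->
  is_repacked R P G' ->
  refines G G' ->
  (forall j, j != l -> G' j = G j) ->
  G' l :\: G l = [set s] ->
  (forall j, (0 < M j)%N) ->
  let a := alpha R G M in
  let a2 := alpha2 R G M in
  let rhs :=
    \sum_(i in G l) c i * c s * sigma psi (P i) (P s) * (a s - a2 i s) / a i
    - \sum_(i in ~: G l | i != s) c i * c s * sigma psi (P i) (P s) * a2 i s / a i
  in
  (Var_est c P psi G' M <= Var_est c P psi G M
     <-> rhs <= 2^-1 * c s ^+ 2 * sigma2 psi (P s)) /\
  (Var_est c P psi G' M < Var_est c P psi G M
     <-> rhs < 2^-1 * c s ^+ 2 * sigma2 psi (P s)).
Proof.
move=> hc _ _ hG hG' href hoth hls hM a a2 rhs.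
have : s \in G' l :\: G l by rewrite hls set11.
rewrite inE => /andP[sNl sG'l].
have GamE t : t != s -> Gam G' t = Gam G t.
  move=> ts; apply/setP => j; rewrite !inE.
  case: (eqVneq j l) => [->|jl]; last by rewrite hoth.
  case tGl: (t \in G l); first by rewrite (subsetP (href l)).
  apply/negbTE/negP => tG'.
  have : t \in G' l :\: G l by rewrite inE tGl tG'.
  by rewrite hls inE (negbTE ts).
have GamS : Gam G' s = l |: Gam G s.
  apply/setP => j; rewrite !inE.
  by case: (eqVneq j l) => [->|jl] //=; rewrite hoth.
have lNs : l \notin Gam G s by rewrite inE.
set d : R := (M l)%:R.
have aE t : t != s -> alpha R G' M t = a t by move=> ts; rewrite /alpha GamE.
have aS : alpha R G' M s = d + a s by rewrite /alpha GamS big_setU1.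
have a2E i k : i != s -> k != s -> alpha2 R G' M i k = a2 i k.
  by move=> is' ks; rewrite /alpha2 !GamE.
have a2S i : i != s -> alpha2 R G' M i s = a2 i s + (if i \in G l then d else 0).
  move=> is'; rewrite /alpha2 GamE // GamS.
  case iGl: (i \in G l).
    rewrite (bigD1 l) /=; last by rewrite !inE eqxx iGl.
    rewrite addrC; congr (_ + _); apply: eq_bigl => j; rewrite !inE.
    by case: (eqVneq j l) => [->|jl] /=; rewrite ?(negbTE sNl) ?andbF ?andbT.
  rewrite addr0; apply: eq_bigl => j; rewrite !inE.
  by case: (eqVneq j l) => [->|jl] /=; rewrite ?(negbTE sNl) ?iGl ?andbF ?andbT.
have apos := alpha_gt0 hG hM.
have dpos : 0 < d by rewrite ltr0n.
have [D [_ _ cG]] := hG.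
have [D' [_ _ cG']] := hG'.
pose f i k := Tm c P psi M G' i k - Tm c P psi M G i k.
pose g i := if i \in G l then c i * c s * sigma psi (P i) (P s) * (a s - a2 i s) / a i
            else - (c i * c s * sigma psi (P i) (P s) * a2 i s / a i).
have fE i : i != s -> f i s = d / (a s * (d + a s)) * g i.
  move=> is'; rewrite /f /Tm a2S // aE // aS /g.
  have h1 := apos i; have h2 := apos s.
  have h3 : 0 < d + a s by rewrite addr_gt0 // ltr0n.
  case: (i \in G l); rewrite /a2 /a /d; field; rewrite !gt_eqF //.
have sumg : \sum_(i < N | i != s) g i = rhs.
  rewrite (bigID (fun i => i \in G l)) /= /rhs; congr (_ + _).
    apply: eq_big => [i|i /andP[_ iGl]]; last by rewrite /g iGl.
    by case iGl: (i \in G l); rewrite ?andbT ?andbF //; apply/negP => /eqP e; rewrite -e iGl in sNl.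
  rewrite -sumrN; apply: eq_big => [i|i /andP[_ /negbTE iGl]]; last by rewrite /g iGl.
  by rewrite inE andbC.
have pairs : \sum_(i < N) \sum_(k < N | (i < k)%N) f i k = \sum_(i < N | i != s) f i s.
  apply: pair_sum => [i k is' ks|i].
    by rewrite /f /Tm !a2E // !aE // subrr.
  by rewrite /f (Tm_sym _ _ _ cG) (Tm_sym _ _ _ cG').
have diff : Var_est c P psi G' M - Var_est c P psi G M
   = 2 * d / (a s * (d + a s)) * (rhs - 2^-1 * c s ^+ 2 * sigma2 psi (P s)).
  rewrite !Var_estE.
  have -> : forall x y u v : R, (x + 2 * u) - (y + 2 * v) = (x - y) + 2 * (u - v)
    by move=> x y u v; ring.
  rewrite -sumrB.
  have -> : \sum_(i < N) \sum_(k < N | (i < k)%N) Tm c P psi M G' i k -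
      \sum_(i < N) \sum_(k < N | (i < k)%N) Tm c P psi M G i k
      = \sum_(i < N) \sum_(k < N | (i < k)%N) f i k.
    by rewrite -sumrB; apply: eq_bigr => i _; rewrite -sumrB.
  rewrite pairs (eq_bigr _ fE) -mulr_sumr sumg.
  rewrite (bigD1 s) //= big1 => [|i is']; last by rewrite aE // subrr.
  rewrite aS addr0.
  have h2 := apos s.
  have h3 : 0 < d + a s by rewrite addr_gt0 // ltr0n.
  rewrite /a /d; field; rewrite !gt_eqF //.
have K : 0 < 2 * d / (a s * (d + a s)).
  have h2 := apos s.
  rewrite /a; apply: divr_gt0; [lra| apply: mulr_gt0; lra].
split.
  rewrite -subr_le0 diff pmulr_rle0 // subr_le0; done.
rewrite -subr_lt0 diff pmulr_rlt0 // subr_lt0; done.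
Qed.
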